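(* Let $k\geqslant0$ and $m\geqslant1$ be integers, let $U\subset\{k+1,\dots,k+m\}$, let $q$ be a positive integer and $a$ a residue class modulo $q$. If $|U|\geqslant\frac m2+\frac q2$, then the number of elements of $U+U$ that are congruent to $a$ modulo $q$ is at least $\frac2q|U|-1$.
   Context: $U+U=\{u+u':u,u'\in U\}$. *)

(* Defs.v *)
From HB Require Import structures.
From mathcomp Require Import all_boot all_order all_algebra.
From mathcomp Require Import finmap.
Set Implicit Arguments. Unset Strict Implicit. Unset Printing Implicit Defensive.
Local Open Scope fset_scope.

Definition sumset (U : {fset nat}) : {fset nat} :=
  [fset (u + v)%N | u in U, v in U].

(* Main.v *)
Require Import Defs.
From HB Require Import structures.
From mathcomp Require Import all_boot all_order all_algebra.
From mathcomp Require Import finmap.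
From mathcomp Require Import zify.
Import GRing.Theory Num.Theory.
From mathcomp Require Import lra.
Local Open Scope fset_scope.

Lemma sumsetAB (A B : {fset nat}) N : (forall x, x \in A -> (x <= N)%N) ->
  A != fset0 -> B != fset0 ->
  (#|`A| + #|`B| <= #|` [fset (u + v)%N | u in A, v in B]| + 1)%N.
Proof.
move=> AN /fset0Pn exA /fset0Pn exB.
case: (ex_maxnP exA AN) => a1 a1A a1max.
case: (ex_minnP exB) => b0 b0B b0min.
set S1 := [fset (u + b0)%N | u in A].
set S2 := [fset (a1 + v)%N | v in B].
have c1 : #|` S1| = #|` A|.
  by apply/eqP/card_in_imfsetP => x y _ _ /eqP; rewrite eqn_add2r => /eqP.
have c2 : #|` S2| = #|` B|.
  by apply/eqP/card_in_imfsetP => x y _ _ /eqP; rewrite eqn_add2l => /eqP.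
have sub : S1 `|` S2 `<=` [fset (u + v)%N | u in A, v in B].
  apply/fsubsetP => x /fsetUP [/imfsetP [u uA ->]|/imfsetP [v vB ->]].
    by apply: in_imfset2.
  by apply: in_imfset2.
have subI : S1 `&` S2 `<=` [fset (a1 + b0)%N].
  apply/fsubsetP => x /fsetIP [/imfsetP [u uA ->] /imfsetP [v vB]] /= e.
  apply/fset1P; have := a1max u uA; have := b0min v vB; lia.
have := cardfsUI S1 S2; rewrite c1 c2 => <-.
have := fsubset_leq_card sub; have := fsubset_leq_card subI; rewrite cardfs1.
lia.
Qed.

Lemma class_bound (S : {fset nat}) k m q : (0 < q)%N ->
  (forall u, u \in S -> (k + 1 <= u <= k + m)%N) ->
  (forall u v, u \in S -> v \in S -> u %% q = v %% q) ->
  (q * #|`S| <= m - 1 + q)%N.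
Proof.
move=> q0 Sb Sc.
pose g u := ((u - (k + 1)) %/ q)%N.
have inj : {in S &, injective g}.
  move=> u v uS vS guv.
  have hu := Sb u uS; have hv := Sb v vS.
  have e : (u - (k + 1)) %% q = (v - (k + 1)) %% q.
    apply/eqP; rewrite -(eqn_modDr (k + 1)).
    have -> : (u - (k + 1) + (k + 1) = u)%N by lia.
    have -> : (v - (k + 1) + (k + 1) = v)%N by lia.
    by apply/eqP; apply: Sc.
  have : (u - (k + 1) = v - (k + 1))%N.
    by rewrite (divn_eq (u - (k+1)) q) (divn_eq (v - (k+1)) q) e; rewrite /g in guv; rewrite guv.
  lia.
have c1 : #|` g @` S| = #|` S| by apply/eqP/card_in_imfsetP.
have sub : g @` S `<=` [fset x in iota 0 ((m - 1) %/ q).+1].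
  apply/fsubsetP => x /imfsetP [u uS ->]; rewrite in_fset mem_iota add0n ltnS /g.
  apply: leq_div2r; have := Sb u uS; lia.
have := fsubset_leq_card sub; rewrite card_fseq undup_id ?iota_uniq // size_iota c1.
have := leq_trunc_div (m - 1) q.
move=> h1 h2.
have := leq_mul2l q #|`S| ((m - 1) %/ q).+1; rewrite h2 orbT => h3.
rewrite mulnS mulnC in h3. lia.
Qed.

Lemma card_sep (U : {fset nat}) (P : pred nat) :
  #|` [fset x in U | P x]| = (\sum_(x <- U) P x)%N.
Proof.
rewrite card_fset_sum1 -big_fset_condE big_mkcond; apply: eq_bigr => x _.
by case: (P x).
Qed.

Lemma sum_unique (U : {fset nat}) (P : nat -> nat -> bool) q :
  (forall u, exists r, (r < q)%N /\ forall r', (r' < q)%N -> P u r' = (r' == r)) ->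
  (\sum_(r < q) #|` [fset x in U | P x r]|)%N = #|` U|.
Proof.
move=> H.
under eq_bigr do rewrite card_sep.
rewrite exchange_big /= card_fset_sum1; apply: eq_bigr => u _.
have [r [rq Hr]] := H u.
rewrite (bigD1 (Ordinal rq)) //= Hr // eqxx big1 // => i ne.
rewrite Hr //; case: eqP => // e; case/eqP: ne.
by apply: val_inj.
Qed.

Theorem mainTheorem7 (k m q a : nat) (U : {fset nat}) :
  (1 <= m)%N -> (0 < q)%N ->
  (forall u, u \in U -> (k + 1 <= u <= k + m)%N) ->
  ((#|` U|%:R : rat) >= m%:R / 2 + q%:R / 2)%R ->
  ((#|` [fset x in sumset U | x == a %[mod q]]%fset|%:R : rat)
     >= 2 / q%:R * #|` U|%:R - 1)%R.
Proof.
move=> m1 q0 Ub Hn.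
set n := #|` U|.
have Hmn : (m + q <= 2 * n)%N.
  rewrite -(ler_nat rat) natrD natrM; lra.
pose A (r : nat) := [fset u in U | u %% q == r].
pose B (r : nat) := [fset u in U | (u + r) %% q == a %% q].
pose f (r : 'I_q) := (#|` A r| + #|` B r|)%N.
have sA : (\sum_(r < q) #|` A r|)%N = n.
  apply: (@sum_unique U (fun x r => x %% q == r)) => u; exists (u %% q); split; first by rewrite ltn_mod.
  by move=> r' _; rewrite eq_sym.
have sB : (\sum_(r < q) #|` B r|)%N = n.
  apply: (@sum_unique U (fun x r => (x + r) %% q == a %% q)) => u; exists ((a + (q - u %% q)) %% q); split.
    by rewrite ltn_mod.
  move=> r' r'q.
  have key : (u + (a + (q - u %% q)) %% q) %% q = a %% q.
    rewrite modnDmr.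
    have -> : (u + (a + (q - u %% q)) = a + (u %/ q).+1 * q)%N.
      have := divn_eq u q; have := ltn_pmod u q0; lia.
    by rewrite addnC modnMDl.
  apply/idP/idP => [/eqP h|/eqP ->]; last by rewrite key.
  apply/eqP; rewrite -(modn_small r'q) -(modn_small (ltn_pmod (a + (q - u %% q)) q0)).
  apply/eqP; rewrite -(eqn_modDl u); apply/eqP; by rewrite h key.
pose i0 := Ordinal q0.
case: (@arg_maxnP _ i0 xpredT f isT) => r _ rmax.
have qf : (2 * n <= q * f r)%N.
  have -> : (2 * n = \sum_(i < q) f i)%N by rewrite big_split /= sA sB; lia.
  have : (\sum_(i < q) f i <= \sum_(i < q) f r)%N by apply: leq_sum => i _; exact: rmax.
  by rewrite sum_nat_const card_ord.
have AUb : forall u, u \in A r -> (k + 1 <= u <= k + m)%N.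
  by move=> u; rewrite in_fset /= => /andP [/Ub].
have BUb : forall u, u \in B r -> (k + 1 <= u <= k + m)%N.
  by move=> u; rewrite in_fset /= => /andP [/Ub].
have cA := @class_bound (A r) k m q q0 AUb.
have cB := @class_bound (B r) k m q q0 BUb.
have cA' : (q * #|` A r| <= m - 1 + q)%N.
  apply: cA => u v; rewrite !in_fset /= => /andP [_ /eqP ->] /andP [_ /eqP ->] //.
have cB' : (q * #|` B r| <= m - 1 + q)%N.
  apply: cB => u v; rewrite !in_fset /= => /andP [_ hu] /andP [_ hv].
  by apply/eqP; rewrite -(eqn_modDr r) (eqP hu) (eqP hv).
have nA : A r != fset0.
  apply/negP => /eqP e; move: qf; rewrite /f e cardfs0 add0n; lia.
have nB : B r != fset0.
  apply/negP => /eqP e; move: qf; rewrite /f e cardfs0 addn0; lia.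
have AN : forall x, x \in A r -> (x <= k + m)%N by move=> x /AUb /andP [].
have hs := @sumsetAB _ _ _ AN nA nB.
have sub : [fset (u + v)%N | u in A r, v in B r] `<=`
           [fset x in sumset U | x == a %[mod q]].
  apply/fsubsetP => x /imfset2P [u uA [v vB ->]].
  move: uA vB; rewrite !in_fset /= => /andP [uU /eqP ur] /andP [vU vr].
  apply/andP; split; first by apply: in_imfset2.
  by rewrite -modnDml ur addnC.
have hc := leq_trans hs (leq_add (fsubset_leq_card sub) (leqnn 1)).
set c := #|` [fset x in sumset U | x == a %[mod q]]%fset| in hc *.
have h1 : ((f r)%:R <= c%:R + 1 :> rat)%R.
  rewrite natr1 ler_nat -addn1; exact: hc.
have h2 : ((2 * n)%:R <= q%:R * (f r)%:R :> rat)%R by rewrite -natrM ler_nat.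
have qpos : (0 < q%:R :> rat)%R by rewrite ltr0n.
have h3 : (2 / q%:R * n%:R <= (f r)%:R :> rat)%R.
  have -> : (2 / q%:R * n%:R = q%:R^-1 * (2 * n)%:R :> rat)%R.
    by rewrite natrM mulrA (mulrC (q%:R^-1)%R).
  by rewrite ler_pdivrMl.
lra.
Qed.
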